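(* Let $F,H$ be graphs, $t$ a positive integer, and $\mathcal{H}$ a Berge-$F$-free $r$-uniform $n$-vertex hypergraph with shadow graph $G$. Then at most $(t-1)\hat{x}_r(n,H,\text{Berge-}F)$ hyperedges of $\mathcal{H}$ contain (the vertex set of) a $t$-light copy of $H$ in $G$.
   Context: A hypergraph $\mathcal{H}$ is a Berge copy of a graph $G$ if $V(G)\subseteq V(\mathcal{H})$ and there is a bijection $f:E(G)\to E(\mathcal{H})$ with $e\subseteq f(e)$ for all $e$; Berge-$F$-free means containing no Berge copy of $F$. The shadow graph of $\mathcal{H}$ is the graph on $V(\mathcal{H})$ where $uv$ is an edge iff some hyperedge contains $u$ and $v$. An edge $uv$ of the shadow graph is $t$-heavy if at least $t$ hyperedges contain both $u,v$, and $t$-light otherwise; a subgraph is $t$-light if all its edges are $t$-light. For graphs $H,G$, $C(H,G)$ is the minimum size of a set of edges of $G$ such that every copy of $H$ in $G$ contains at least one of them. $\hat{x}_r(n,H,\text{Berge-}F)$ is the maximum of $C(H,G)$ over shadow graphs $G$ of Berge-$F$-free $r$-uniform $n$-vertex hypergraphs. *)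

(* Defs.v *)
From mathcomp Require Import all_boot.
Set Implicit Arguments. Unset Strict Implicit. Unset Printing Implicit Defensive.

Definition is_graph (V : finType) (E : {set {set V}}) : bool :=
  [forall e in E, #|e| == 2].

Definition uniform (n r : nat) (HE : {set {set 'I_n}}) : bool :=
  [forall h in HE, #|h| == r].

Definition berge_copy (VF : finType) (EF : {set {set VF}}) (n : nat)
  (HE : {set {set 'I_n}}) : bool :=
  [exists phi : {ffun VF -> 'I_n},
     injectiveb phi &&
     [exists f : {ffun {set VF} -> {set 'I_n}},
        [forall e1 in EF, forall e2 in EF, (f e1 == f e2) ==> (e1 == e2)] &&
        [forall e in EF, (f e \in HE) && (phi @: e \subset f e)]]].

Definition berge_free (VF : finType) (EF : {set {set VF}}) (n : nat)
  (HE : {set {set 'I_n}}) : bool := ~~ berge_copy EF HE.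

Definition shadow (n : nat) (HE : {set {set 'I_n}}) : {set {set 'I_n}} :=
  [set e : {set 'I_n} | (#|e| == 2) && [exists h in HE, e \subset h]].

Definition mult (n : nat) (HE : {set {set 'I_n}}) (e : {set 'I_n}) : nat :=
  #|[set h in HE | e \subset h]|.

(* phi : V(H) -> 'I_n is an embedding of H into the graph G (a copy of H in G,
   namely the subgraph with vertex set phi(V(H)) and edges phi(e), e in E(H)). *)
Definition embedding (VH : finType) (EH : {set {set VH}}) (n : nat)
  (G : {set {set 'I_n}}) (phi : {ffun VH -> 'I_n}) : bool :=
  injectiveb phi && [forall e in EH, phi @: e \in G].

Definition hits (VH : finType) (EH : {set {set VH}}) (n : nat)
  (G S : {set {set 'I_n}}) : bool :=
  [forall phi : {ffun VH -> 'I_n},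
     embedding EH G phi ==> [exists e in EH, phi @: e \in S]].

(* C(H,G): minimum size of a set of edges of G meeting every copy of H in G.
   (The default #|G| is attained by S = G whenever H has an edge.) *)
Definition C_HG (VH : finType) (EH : {set {set VH}}) (n : nat)
  (G : {set {set 'I_n}}) : nat :=
  \big[minn/#|G|]_(S : {set {set 'I_n}} | (S \subset G) && hits EH G S) #|S|.

Definition xhat (r n : nat) (VH : finType) (EH : {set {set VH}})
  (VF : finType) (EF : {set {set VF}}) : nat :=
  \max_(HE : {set {set 'I_n}} | uniform r HE && berge_free EF HE)
     C_HG EH (shadow HE).

Definition contains_light_copy (VH : finType) (EH : {set {set VH}}) (t n : nat)
  (HE : {set {set 'I_n}}) (h : {set 'I_n}) : bool :=
  [exists phi : {ffun VH -> 'I_n},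
     [&& embedding EH (shadow HE) phi,
         [forall e in EH, mult HE (phi @: e) < t] &
         (phi @: [set: VH] \subset h)]].

(* Main.v *)
Require Import Defs.
From mathcomp Require Import all_boot.

Lemma card_bigcup_le {I T : finType} (P : pred I) (F : I -> {set T}) :
  #|\bigcup_(i | P i) F i| <= \sum_(i | P i) #|F i|.
Proof.
apply: (big_ind2 (fun (X : {set T}) (m : nat) => #|X| <= m)) => //.
- by rewrite cards0.
- move=> X1 m1 X2 m2 H1 H2.
  by apply: leq_trans (leq_card_setU X1 X2) (leq_add H1 H2).
Qed.

Lemma key (VH : finType) (EH : {set {set VH}}) (t n : nat)
  (HE : {set {set 'I_n}}) (S : {set {set 'I_n}}) :
  hits EH (shadow HE) S ->
  #|[set h in HE | contains_light_copy EH t HE h]| <= (t - 1) * #|S|.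
Proof.
move=> /forallP hS.
set A := [set h in HE | _].
have sub : A \subset \bigcup_(s in S | mult HE s < t) [set h in HE | s \subset h].
  apply/subsetP => h; rewrite inE => /andP [hHE /existsP [phi /and3P [emb light sub]]].
  have /existsP [e /andP [eEH eS]] := implyP (hS phi) emb.
  apply/bigcupP; exists (phi @: e).
    by rewrite eS /=; exact: (implyP (forallP light e) eEH).
  rewrite inE hHE /=; apply: subset_trans sub; apply: imsetS; exact: subsetT.
apply: leq_trans (subset_leq_card sub) _.
apply: (leq_trans (card_bigcup_le _ _)).
apply: (@leq_trans (\sum_(s in S) (t - 1))); last by rewrite sum_nat_const mulnC.
rewrite [X in _ <= X](bigID (fun s => mult HE s < t)) /=.
apply: leq_trans (leq_addr _ _).
apply: leq_sum => s /andP [_ hs].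
rewrite /mult in hs; by rewrite subn1 -ltnS prednK // (leq_ltn_trans _ hs).
Qed.

Theorem proposition11 (VF VH : finType) (EF : {set {set VF}})
  (EH : {set {set VH}}) (t r n : nat) (HE : {set {set 'I_n}}) :
  is_graph EF -> is_graph EH -> EH != set0 -> 0 < t ->
  uniform r HE -> berge_free EF HE ->
  #|[set h in HE | contains_light_copy EH t HE h]|
    <= (t - 1) * xhat r n EH EF.
Proof.
move=> _ _ /set0Pn [e0 e0EH] t0 unif bf.
apply: (@leq_trans ((t - 1) * C_HG EH (shadow HE))); last first.
  apply: leq_mul => //; rewrite /xhat.
  by apply: (@leq_bigmax_cond _ (fun HE => uniform r HE && berge_free EF HE)
    (fun HE => C_HG EH (shadow HE)) HE); rewrite unif bf.
rewrite /C_HG.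
apply: (big_ind (fun m => #|[set h in HE | contains_light_copy EH t HE h]| <= (t - 1) * m)).
- apply: key; apply/forallP => phi; apply/implyP => /andP [_ /forallP emb].
  apply/existsP; exists e0; rewrite e0EH /=.
  exact: (implyP (emb e0) e0EH).
- move=> x y hx hy /=; by case: (leqP x y).
- move=> S /andP [_ hS]; exact: key.
Qed.
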